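(* Let $\Gamma$ be a connected finite simple graph on $N\ge3$ vertices with minimum degree $d=2$ and $\varepsilon=\frac12$. If there are distinct vertices $u\sim v\sim w$ with $\deg u=\deg v=\deg w=2$, then $\Gamma$ is the cycle $C_3$ or the cycle $C_6$.
   Context: For a finite simple graph $\Gamma=(V,E)$ without isolated vertices, $\deg v$ is the number of neighbours of $v$ and $\mathcal N(v)=\{w\in V: w\sim v\}$. The normalized Laplacian acts on functions $f:V\to\mathbb R$ by $\Delta f(v)=f(v)-\frac{1}{\deg v}\sum_{w\sim v}f(w)$; its eigenvalues are $0=\lambda_1\le\lambda_2\le\dots\le\lambda_N$, and $\varepsilon:=\min_i|1-\lambda_i|$. $d$ denotes the minimum vertex degree. *)

(* Defs.v *)
From mathcomp Require Import all_boot all_order all_algebra fingraph.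
From mathcomp Require Import reals.
Set Implicit Arguments. Unset Strict Implicit. Unset Printing Implicit Defensive.
Import Order.TTheory GRing.Theory Num.Theory.
Local Open Scope ring_scope.

Definition simple_graph (T : finType) (adj : rel T) : Prop :=
  symmetric adj /\ irreflexive adj.

Definition deg (T : finType) (adj : rel T) (v : T) : nat := #|[set w | adj v w]|.

Definition connected_graph (T : finType) (adj : rel T) : Prop :=
  forall x y : T, connect adj x y.

Definition min_degree_is (T : finType) (adj : rel T) (d : nat) : Prop :=
  (forall v, (d <= deg adj v)%N) /\ exists v, deg adj v = d.

Definition nlap (R : realType) (T : finType) (adj : rel T) (f : T -> R) (v : T) : R :=
  f v - (deg adj v)%:R^-1 * \sum_(w | adj v w) f w.

Definition nlap_eigenvalue (R : realType) (T : finType) (adj : rel T) (l : R) : Prop :=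
  exists f : T -> R, (exists v, f v != 0) /\ forall v, nlap adj f v = l * f v.

Definition epsilon_is (R : realType) (T : finType) (adj : rel T) (e : R) : Prop :=
  (exists l, nlap_eigenvalue adj l /\ `|1 - l| = e) /\
  (forall l, nlap_eigenvalue adj l -> e <= `|1 - l|).

Definition cycle_adj (n : nat) : rel 'I_n :=
  fun i j => (j == (i.+1 %% n)%N :> nat) || (i == (j.+1 %% n)%N :> nat).

Definition iso_cycle (T : finType) (adj : rel T) (n : nat) : Prop :=
  exists f : T -> 'I_n, bijective f /\ forall x y, adj x y = cycle_adj (f x) (f y).

(* Main.v *)
Require Import Defs.
From mathcomp Require Import all_boot all_order all_algebra fingraph.
From mathcomp Require Import reals.
From mathcomp Require Import sesquilinear spectral complex.
From mathcomp Require Import ring lra.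
Import Order.TTheory GRing.Theory Num.Theory.
Local Open Scope ring_scope.

Set Implicit Arguments. Unset Strict Implicit. Unset Printing Implicit Defensive.

Ltac elim_eqs :=
  repeat match goal with
  | H : is_true (?a != ?b) |- context [?a == ?b] => rewrite (negbTE H)
  | H : is_true (?a != ?b) |- context [?b == ?a] => rewrite (eq_sym b a) (negbTE H)
  | |- context [?a == ?a] => rewrite eqxx
  end.

Section Spec.
Local Open Scope sesquilinear_scope.
Variable R : realType.
Local Notation C := (R[i]).
Local Notation toC := (real_complex R).

Lemma ReD (x y : C) : complex.Re (x + y) = complex.Re x + complex.Re y.
Proof. by case: x; case: y. Qed.
Lemma ImD (x y : C) : complex.Im (x + y) = complex.Im x + complex.Im y.
Proof. by case: x; case: y. Qed.
Lemma ReMr (x : C) (r : R) : complex.Re (x * toC r) = complex.Re x * r.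
Proof. by case: x => a b; simpc. Qed.
Lemma ImMr (x : C) (r : R) : complex.Im (x * toC r) = complex.Im x * r.
Proof. by case: x => a b; simpc. Qed.
Lemma ReMl (x : C) (r : R) : complex.Re (toC r * x) = r * complex.Re x.
Proof. by rewrite mulrC ReMr mulrC. Qed.
Lemma ImMl (x : C) (r : R) : complex.Im (toC r * x) = r * complex.Im x.
Proof. by rewrite mulrC ImMr mulrC. Qed.
Lemma Re_sum I (s : seq I) (P : pred I) (F : I -> C) :
  complex.Re (\sum_(i <- s | P i) F i) = \sum_(i <- s | P i) complex.Re (F i).
Proof. by apply: (big_morph _ ReD). Qed.
Lemma Im_sum I (s : seq I) (P : pred I) (F : I -> C) :
  complex.Im (\sum_(i <- s | P i) F i) = \sum_(i <- s | P i) complex.Im (F i).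
Proof. by apply: (big_morph _ ImD). Qed.


Lemma map_toC_conj m n (A : 'M[R]_(m, n)) : map_mx Num.conj (map_mx toC A) = map_mx toC A.
Proof. by apply/matrixP => i j; rewrite !mxE; exact: conjc_real. Qed.

Lemma real_eig n (S : 'M[R]_n) (u : 'rV[C]_n) (x : R) :
  u != 0 -> u *m map_mx toC S = toC x *: u ->
  exists v : 'rV[R]_n, v != 0 /\ v *m S = x *: v.
Proof.
move=> u0 eu.
have eRe : map_mx (@complex.Re R) u *m S = x *: map_mx (@complex.Re R) u.
  apply/rowP => j; move/rowP: eu => /(_ j); rewrite !mxE => /(congr1 (@complex.Re R)).
  rewrite Re_sum ReMl => <-; apply: eq_bigr => i _; by rewrite !mxE ReMr.
have eIm : map_mx (@complex.Im R) u *m S = x *: map_mx (@complex.Im R) u.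
  apply/rowP => j; move/rowP: eu => /(_ j); rewrite !mxE => /(congr1 (@complex.Im R)).
  rewrite Im_sum ImMl => <-; apply: eq_bigr => i _; by rewrite !mxE ImMr.
have [r0|rn0] := eqVneq (map_mx (@complex.Re R) u) 0; last by exists (map_mx (@complex.Re R) u).
have [i0|in0] := eqVneq (map_mx (@complex.Im R) u) 0; last by exists (map_mx (@complex.Im R) u).
case/eqP: u0; apply/rowP => j.
move/rowP: r0 => /(_ j); move/rowP: i0 => /(_ j); rewrite !mxE.
by case: (u 0 j) => a b /= -> ->.
Qed.


Lemma spectral_bound n (S : 'M[R]_n) (c : R) :
  S^T = S -> 0 <= c ->
  (forall (x : R) (v : 'rV[R]_n), v != 0 -> v *m S = x *: v -> c <= `|x|) ->
  forall g : 'rV[R]_n, c ^+ 2 * (g *m g^T) 0 0 <= ((g *m S) *m (g *m S)^T) 0 0.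
Proof.
move=> Ssym c0 Hev g.
set Sc := map_mx toC S.
have ScT : Sc ^t Num.conj = Sc.
  apply/matrixP=> i j; rewrite /Sc !mxE -[in RHS]Ssym mxE; exact: conjc_real.
have Sc_herm : Sc \is hermsymmx.
  by apply/is_hermitianmxP; rewrite expr0 scale1r ScT.
have SE := orthomx_spectralP (hermitian_normalmx Sc_herm).
set U := spectralmx Sc in SE; set d := spectral_diag Sc in SE.
have Uu : U \is unitarymx := spectral_unitarymx Sc.
have Uunit : U \in unitmx := spectral_unit Sc.
have dR : d \is a realmx := hermitian_spectral_diag_real Sc_herm.
have UtU : U^t* *m U = 1%:M by rewrite -invmx_unitary // mulVmx.
have UUt : U *m U^t* = 1%:M by apply/unitarymxP.
have dge : forall k, toC (c ^+ 2) <= `|d 0 k| ^+ 2.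
  move=> k.
  have /complex_realP [x dx] : d 0 k \is Num.real by move/mxOverP: dR; apply.
  have eu : row k U *m Sc = toC x *: row k U.
    rewrite -dx.
    have -> : row k U *m Sc = row k (U *m Sc) by rewrite -row_mul.
    rewrite {1}SE !mulmxA mulmxV // mul1mx row_mul.
    by rewrite row_diag_mx -scalemxAl -rowE.
  have u0 : row k U != 0.
    apply/eqP => rk0; have := congr1 (row k) UUt; rewrite row_mul rk0 mul0mx.
    by move/rowP/(_ k); rewrite !mxE eqxx /= => /eqP; rewrite eq_sym oner_eq0.
  have [v [v0 ev]] := real_eig u0 eu.
  have := Hev x v v0 ev => cx.
  rewrite dx normc_def /= expr0n /= addr0 sqrtr_sqr -rmorphXn lecR.
  by rewrite lerXn2r // ?nnegrE // (le_trans c0 cx).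
set h := map_mx toC g.
have conjT : forall m (A : 'M[R]_(1, m)), (map_mx toC A)^t* = map_mx toC A^T.
  by move=> m A; rewrite map_trmx map_toC_conj.
have entry : forall m (A B : 'M[C]_(1, m)),
    (A *m B^t*) 0 0 = \sum_j A 0 j * Num.conj (B 0 j).
  by move=> m A B; rewrite !mxE; apply: eq_bigr => j _; rewrite !mxE.
rewrite -lecR rmorphM /=.
have -> : toC ((g *m g^T) 0 0) = (h *m h^t*) 0 0.
  by rewrite /h conjT -map_mxM [in RHS]mxE.
have -> : toC ((g *m S *m (g *m S)^T) 0 0) = (h *m Sc *m (h *m Sc)^t*) 0 0.
  have hS : h *m Sc = map_mx toC (g *m S) by rewrite map_mxM.
  by rewrite hS conjT -map_mxM [in RHS]mxE.
set w := h *m U^t*.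
set X := w *m diag_mx d.
have hw : h = w *m U by rewrite /w -mulmxA UtU mulmx1.
have hX : h *m Sc = X *m U by rewrite {1}SE invmx_unitary // !mulmxA.
have Xe : forall j, X 0 j = w 0 j * d 0 j.
  by move=> j; rewrite /X mul_mx_diag [LHS]mxE.
clearbody X w.
rewrite hX trmx_mul map_mxM mulmxA -(mulmxA X) UUt mulmx1.
rewrite hw trmx_mul map_mxM mulmxA -(mulmxA w) UUt mulmx1.
rewrite !entry mulr_sumr; apply: ler_sum => j _.
rewrite Xe.
have -> : w 0 j * d 0 j * Num.conj (w 0 j * d 0 j) = (w 0 j * Num.conj (w 0 j)) * `|d 0 j| ^+ 2.
  by rewrite normCK rmorphM /=; ring.
have := dge j; rewrite rmorphXn /= expr2 => dj.
rewrite mulrC; apply: ler_wpM2l; first exact: mul_conjC_ge0.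
exact: dj.
Qed.

End Spec.

Section L.
Variables (R : realType) (T : finType) (adj : rel T).
Hypothesis adjsym : symmetric adj.
Hypothesis degpos : forall v, (0 < deg adj v)%N.

Definition avg (f : T -> R) x := (deg adj x)%:R^-1 * \sum_(y | adj x y) f y.
Local Notation n := #|T|.
Local Notation e := (@enum_val T (pred_of_simpl predT)).

Lemma sumT (F : T -> R) : \sum_(i < n) F (enum_val i) = \sum_x F x.
Proof.
rewrite (reindex (@enum_rank T) (onW_bij _ (@enum_rank_bij T))).
by apply: eq_bigr => x _; rewrite enum_rankK.
Qed.


Local Notation sq x := (Num.sqrt (deg adj x)%:R : R).

Lemma sq_gt0 x : 0 < sq x.
Proof. by rewrite sqrtr_gt0 ltr0n degpos. Qed.
Lemma sq_sqr x : sq x ^+ 2 = (deg adj x)%:R.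
Proof. by rewrite sqr_sqrtr // ler0n. Qed.

Definition Smx : 'M[R]_n := \matrix_(i, j)
  (if adj (enum_val i) (enum_val j) then (sq (enum_val i) * sq (enum_val j))^-1 else 0).

Lemma Smx_sym : Smx^T = Smx.
Proof. by apply/matrixP => i j; rewrite !mxE adjsym mulrC. Qed.

Lemma vS_entry (v : 'rV[R]_n) j :
  (v *m Smx) 0 j = (sq (enum_val j))^-1 *
     \sum_(y | adj (enum_val j) y) v 0 (enum_rank y) / sq y.
Proof.
rewrite mxE mulr_sumr [RHS]big_mkcond -[RHS]sumT; apply: eq_bigr => i _.
rewrite mxE enum_valK adjsym; case: ifP => _; last by rewrite mulr0.
by rewrite invfM; ring.
Qed.


Lemma spectral_L :
  (forall l : R, nlap_eigenvalue adj l -> 1/2 <= `|1 - l|) ->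
  forall f : T -> R, 1/4 * \sum_x (deg adj x)%:R * f x ^+ 2 <=
                     \sum_x (deg adj x)%:R * avg f x ^+ 2.
Proof.
move=> Heps f.
have sqn0 : forall y, sq y != 0 by move=> y; rewrite gt_eqF ?sq_gt0.
have := @spectral_bound R n Smx (1/2) Smx_sym _ _
   (\row_i (sq (enum_val i) * f (enum_val i))).
have Hb : 1 / 2 ^+ 2 = 1 / 4 :> R by rewrite -natrX; congr (_ / _).
rewrite expr_div_n expr1n Hb => H.
have c0 : (0:R) <= 1/2 by rewrite divr_ge0 ?ler0n.
have Hev : forall (x : R) (v : 'rV[R]_n), v != 0 -> v *m Smx = x *: v -> 1/2 <= `|x|.
  move=> x v v0 ev.
  set f' := fun y => v 0 (enum_rank y) / sq y.
  have : nlap_eigenvalue adj (1 - x).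
    exists f'; split.
      have [j vj] : exists j, v 0 j != 0.
        apply/existsP; apply: contraNT v0 => /existsPn H0.
        by apply/eqP/rowP => j; rewrite mxE; apply/eqP; move: (H0 j); rewrite negbK.
      exists (enum_val j); rewrite /f' enum_valK mulf_neq0 //.
      by rewrite invr_eq0.
    move=> y; rewrite /nlap.
    move/rowP: ev => /(_ (enum_rank y)); rewrite vS_entry enum_rankK mxE => ev.
    have -> : \sum_(w | adj y w) f' w = sq y * (x * v 0 (enum_rank y)).
      by rewrite -ev mulrA mulfV ?mul1r.
    rewrite /f'; move: (sq_sqr y) (sqn0 y); set s := sq y => <- sn0; field; exact: sn0.
  by move/Heps; rewrite opprB addrC subrK.
have {H} := H c0 Hev.
set g := \row_i _.
have -> : (g *m g^T) 0 0 = \sum_x (deg adj x)%:R * f x ^+ 2.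
  rewrite mxE -sumT; apply: eq_bigr => i _; rewrite !mxE; move: (sq_sqr (enum_val i)); set s := sq _ => <-; ring.
have -> : (g *m Smx *m (g *m Smx)^T) 0 0 = \sum_x (deg adj x)%:R * avg f x ^+ 2.
  rewrite mxE -sumT; apply: eq_bigr => i _; rewrite [(_^T) _ _]mxE vS_entry.
  have -> : \sum_(y | adj (enum_val i) y) g 0 (enum_rank y) / sq y =
            \sum_(y | adj (enum_val i) y) f y.
    apply: eq_bigr => y _; rewrite mxE enum_rankK; field; exact: sqn0.
  rewrite /avg; move: (sq_sqr (enum_val i)) (sqn0 (enum_val i)); set s := sq _ => <- sn0.
  field; exact: sn0.
by [].
Qed.

End L.

Section G.
Variables (T : finType) (adj : rel T).
Hypothesis adjsym : symmetric adj.
Hypothesis adjirr : irreflexive adj.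

Lemma nbrs2 x a b : deg adj x = 2%N -> adj x a -> adj x b -> a != b ->
  forall y, adj x y = (y == a) || (y == b).
Proof.
move=> dx xa xb ab.
have E : [set w | adj x w] = [set a; b].
  apply/esym/eqP; rewrite eqEcard; apply/andP; split.
    by apply/subsetP => y; rewrite !inE => /orP [] /eqP ->.
  by rewrite cards2 ab -/(deg adj x) dx.
by move=> y; move/setP: E => /(_ y); rewrite !inE.
Qed.

Lemma other_nbr x a : deg adj x = 2%N -> adj x a -> exists2 b, adj x b & b != a.
Proof.
move=> dx xa.
have := cardsD1 a [set w | adj x w]; rewrite inE xa -/(deg adj x) dx => /eqP.
rewrite add1n eqSS eq_sym => /eqP c1.
have : (0 < #|[set w | adj x w] :\ a|)%N by rewrite c1.
by case/card_gt0P => b; rewrite !inE => /andP [ba xb]; exists b.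
Qed.

Lemma sum_ind (R : realType) (P : pred T) a :
  \sum_(w | P w) (w == a)%:R = (P a)%:R :> R.
Proof.
rewrite big_mkcond (bigD1 a) //= eqxx big1 ?addr0; first by case: (P a).
by move=> w /negbTE ->; case: (P w).
Qed.

Lemma sum_support (R : realType) (s : seq T) (G : T -> R) :
  uniq s -> (forall t, t \notin s -> G t = 0) -> \sum_t G t = \sum_(t <- s) G t.
Proof.
move=> us H; rewrite (bigID (mem s)) /= [X in _ + X]big1 ?addr0.
  by rewrite big_uniq.
by move=> t; apply: H.
Qed.

Lemma closed_all (s : seq T) u : connected_graph adj -> u \in s ->
  (forall x y, x \in s -> adj x y -> y \in s) -> forall t, t \in s.
Proof.
move=> conn us cl t.
have cl' : closed adj (mem s).
  move=> x y xy; apply/idP/idP => [xs|ys]; first exact: cl xy.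
  by apply: cl ys _; rewrite adjsym.
by rewrite -(closed_connect cl' (conn u t)).
Qed.

Lemma iso_of_seq m (s : seq T) x0 : size s = m.+1 -> uniq s -> (forall t, t \in s) ->
  (forall i j : 'I_m.+1, adj (nth x0 s i) (nth x0 s j) = cycle_adj i j) ->
  iso_cycle adj m.+1.
Proof.
move=> ss us alls H.
pose phi := fun t : T => (inord (index t s) : 'I_m.+1).
pose psi := fun i : 'I_m.+1 => nth x0 s i.
have psiK : cancel phi psi.
  move=> t; rewrite /phi /psi inordK ?nth_index //.
  by rewrite -ss index_mem.
have phiK : cancel psi phi.
  by move=> i; rewrite /phi /psi index_uniq ?ss // inord_val.
exists phi; split; first by exists psi.
move=> x y; transitivity (adj (psi (phi x)) (psi (phi y))); first by rewrite !psiK.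
exact: H.
Qed.

End G.

Section H.
Variables (R : realType) (T : finType) (adj : rel T).
Hypothesis adjsym : symmetric adj.
Hypothesis adjirr : irreflexive adj.
Hypothesis degge2 : forall v, (2 <= deg adj v)%N.
Hypothesis Lineq : forall f : T -> R, 1/4 * \sum_x (deg adj x)%:R * f x ^+ 2 <=
                     \sum_x (deg adj x)%:R * avg adj f x ^+ 2.

Lemma inv_le (k m : nat) : (0 < m)%N -> (m <= k)%N -> ((k%:R)^-1 : R) <= (m%:R)^-1.
Proof.
move=> m0 mk; rewrite lef_pV2 ?ler_nat // posrE ltr0n //; exact: leq_trans mk.
Qed.

Lemma degR x : (0 : R) < (deg adj x)%:R.
Proof. by rewrite ltr0n (leq_trans _ (degge2 x)). Qed.

Lemma term_eq (f : T -> R) x :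
  (deg adj x)%:R * avg adj f x ^+ 2 = (\sum_(y | adj x y) f y) ^+ 2 / (deg adj x)%:R.
Proof.
rewrite /avg; have := degR x; move: (deg adj x)%:R => d d0.
by field; rewrite gt_eqF.
Qed.


Lemma lemA x y z p q : adj x y -> x != z -> deg adj x = 2%N -> deg adj z = 2%N ->
  adj z y -> adj x p -> p != y -> adj z q -> q != y -> p != z ->
  [/\ p != q, deg adj p = 2%N & deg adj q = 2%N].
Proof.
move=> xy xz dx dz zy xp py zq qy pz.
have yp : y != p by rewrite eq_sym.
have yq : y != q by rewrite eq_sym.
have nx := nbrs2 dx xy xp yp.
have nz := nbrs2 dz zy zq yq.
have nx' : forall t, adj t x = (t == y) || (t == p) by move=> t; rewrite adjsym nx.
have nz' : forall t, adj t z = (t == y) || (t == q) by move=> t; rewrite adjsym nz.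
pose f := fun t : T => ((t == x)%:R - (t == z)%:R : R).
have := Lineq f.
have -> : \sum_t (deg adj t)%:R * f t ^+ 2 = 4.
  rewrite (@sum_support _ _ [:: x; z]) ?big_cons ?big_nil /=.
  - rewrite /f !eqxx; elim_eqs; rewrite dx dz /=; ring.
  - by rewrite inE xz.
  - move=> t; rewrite !inE negb_or => /andP [tx tz]; rewrite /f; elim_eqs.
    by rewrite subrr expr0n /= mulr0.
have avgE : forall t, \sum_(w | adj t w) f w = (adj t x)%:R - (adj t z)%:R.
  by move=> t; rewrite /f sumrB !sum_ind.
under eq_bigr => t _ do rewrite term_eq avgE nx' nz'.
have -> : 1 / 4 * 4 = 1 :> R by field.
have [pq|pq] := eqVneq p q.
  rewrite big1 ?ler10 // => t _; rewrite pq subrr expr0n /= mul0r //.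
rewrite (@sum_support _ _ [:: p; q]) ?big_cons ?big_nil /=.
- elim_eqs; rewrite !orbT /= subr0 sub0r sqrrN expr1n !mul1r addr0 => H.
  have dp := degge2 p; have dq := degge2 q.
  have ip : ((deg adj p)%:R^-1 : R) <= 2%:R^-1 by apply: inv_le.
  have iq : ((deg adj q)%:R^-1 : R) <= 2%:R^-1 by apply: inv_le.
  have i3 : forall k, (2 < k)%N -> ((k%:R)^-1 : R) <= 3%:R^-1 by move=> k k3; apply: inv_le.
  split => //; apply/eqP; rewrite eqn_leq ?dp ?dq andbT leqNgt; apply/negP => /i3 H3.
    have : (2%:R^-1 : R) = 1/2 by rewrite div1r.
    have : (3%:R^-1 : R) = 1/3 by rewrite div1r.
    lra.
  have : (2%:R^-1 : R) = 1/2 by rewrite div1r.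
  have : (3%:R^-1 : R) = 1/3 by rewrite div1r.
  lra.
- by rewrite inE pq.
- move=> t; rewrite !inE negb_or => /andP [tp tq]; elim_eqs.
  by rewrite subrr expr0n /= mul0r.
Qed.

End H.

Unset Implicit Arguments.

Theorem mainTheorem8 (R : realType) (T : finType) (adj : rel T) :
  simple_graph adj ->
  connected_graph adj ->
  (3 <= #|T|)%N ->
  min_degree_is adj 2 ->
  epsilon_is adj (1 / 2 : R) ->
  (exists u v w : T, [/\ u != v, v != w, u != w & adj u v /\ adj v w] /\
     [/\ deg adj u = 2%N, deg adj v = 2%N & deg adj w = 2%N]) ->
  iso_cycle adj 3 \/ iso_cycle adj 6.
Proof.
move=> [adjsym adjirr] conn _ [mind _] [_ epsall].
move=> [u [v [w [[uv vw uw [uadjv vadjw]] [du dv dw]]]]].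
have degpos : forall x, (0 < deg adj x)%N by move=> x; exact: leq_trans (mind x).
have Lineq := spectral_L adjsym degpos epsall.
have irr : forall x y, adj x y -> x != y.
  by move=> x y xy; apply: contraTneq xy => ->; rewrite adjirr.
have vadju : adj v u by rewrite adjsym.
have wadjv : adj w v by rewrite adjsym.
have nv := nbrs2 dv vadju vadjw uw.
have [a ua av] := other_nbr du uadjv.
have va : v != a by rewrite eq_sym.
have nu := nbrs2 du uadjv ua va.
have [b wb bv] := other_nbr dw wadjv.
have vb : v != b by rewrite eq_sym.
have nw := nbrs2 dw wadjv wb vb.
have [aw|aw] := eqVneq a w.
  subst a.
  have wu : adj w u by rewrite adjsym.
  have vu : v != u by rewrite eq_sym.
  have wu' : w != u by rewrite eq_sym.
  have wv : w != v by rewrite eq_sym.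
  have nw' := nbrs2 dw wadjv wu vu.
  have alls : forall t, t \in [:: u; v; w].
    apply: (closed_all adjsym conn (u := u)); first by rewrite inE eqxx.
    move=> x y; rewrite !inE => /or3P [] /eqP -> ; rewrite ?nu ?nv ?nw' => /orP [] /eqP ->;
      by rewrite eqxx ?orbT.
  left; apply: (iso_of_seq (x0 := u) _ _ alls) => //.
    by rewrite /= !inE negb_or uv uw vw.
  case=> [[|[|[|i]]] Hi] //; case=> [[|[|[|j]]] Hj] //=;
    rewrite ?nu ?nv ?nw' ?adjirr; elim_eqs; by [].
have au : a != u by rewrite eq_sym irr.
have bw : b != w by rewrite eq_sym irr.
have bu : b != u.
  apply: contraTneq wb => ->; rewrite adjsym nu; elim_eqs; by [].
have wu : adj w u = false by rewrite adjsym nu; elim_eqs.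
have [ab da db] := lemA adjsym mind Lineq uadjv uw du dw wadjv ua av wb bv aw.
have au' : adj a u by rewrite adjsym.
have bw' : adj b w by rewrite adjsym.
have [c ac cu] := other_nbr da au'.
have uc : u != c by rewrite eq_sym.
have na := nbrs2 da au' ac uc.
have [d bd dw'] := other_nbr db bw'.
have wd : w != d by rewrite eq_sym.
have nb := nbrs2 db bw' bd wd.
have wu2 : w != u by rewrite eq_sym.
have wa : w != a by rewrite eq_sym.
have [wc _ dc] := lemA adjsym mind Lineq vadju va dv da au' vadjw wu2 ac cu wa.
have ub : u != b by rewrite eq_sym.
have [ud _ dd] := lemA adjsym mind Lineq vadjw vb dv db bw' vadju uw bd dw' ub.
have ca : c != a by rewrite eq_sym irr.
have db' : d != b by rewrite eq_sym irr.
have cv : c != v.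
  apply: contraTneq ac => ->; rewrite adjsym nv; elim_eqs; by [].
have dv' : d != v.
  apply: contraTneq bd => ->; rewrite adjsym nv; elim_eqs; by [].
have nu' : forall t, adj t u = (t == v) || (t == a) by move=> t; rewrite adjsym nu.
have nv' : forall t, adj t v = (t == u) || (t == w) by move=> t; rewrite adjsym nv.
have nw' : forall t, adj t w = (t == v) || (t == b) by move=> t; rewrite adjsym nw.
have na' : forall t, adj t a = (t == u) || (t == c) by move=> t; rewrite adjsym na.
have nb' : forall t, adj t b = (t == w) || (t == d) by move=> t; rewrite adjsym nb.
have [cb|cb] := eqVneq c b.
  subst c.
  have da2 : d = a.
    move: (nb a); rewrite adjsym na eqxx orbT; elim_eqs => /= /esym/eqP ->; done.
  subst d.
  exfalso.
  pose f := fun t : T => ((t == a)%:R - (t == v)%:R - (t == w)%:R : R).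
  have := Lineq f.
  have -> : \sum_t (deg adj t)%:R * f t ^+ 2 = 6.
    rewrite (@sum_support _ _ [:: a; v; w]) ?big_cons ?big_nil /=.
    - rewrite /f; elim_eqs; rewrite da dv dw /=; ring.
    - by rewrite !inE negb_or av aw vw.
    - move=> t; rewrite !inE !negb_or => /and3P [ta tv tw]; rewrite /f; elim_eqs.
      by rewrite !subrr expr0n /= mulr0.
  have avgE : forall t, \sum_(x | adj t x) f x = (adj t a)%:R - (adj t v)%:R - (adj t w)%:R.
    by move=> t; rewrite /f !sumrB !sum_ind.
  under eq_bigr => t _ do rewrite (term_eq mind) avgE na' nv' nw'.
  rewrite (@sum_support _ _ [:: a; u; v; w; b]) ?big_cons ?big_nil /=.
  - elim_eqs; rewrite /= ?orbT /= dv dw.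
    lra.
  - by rewrite !inE !negb_or; elim_eqs.
  - move=> t; rewrite !inE !negb_or => /and5P [ta tu tv tw tb]; elim_eqs.
    by rewrite /= !subrr expr0n /= mul0r.
have da' : d != a.
  apply: contraTneq bd => ->; rewrite adjsym na; elim_eqs; by [].
have ad : a != d by rewrite eq_sym.
have bc : b != c by rewrite eq_sym.
have [cd|cd] := eqVneq c d.
  subst d.
  have ca' : adj c a by rewrite adjsym.
  have cb' : adj c b by rewrite adjsym.
  have nc := nbrs2 dc ca' cb' ab.
  have alls : forall t, t \in [:: u; v; w; b; c; a].
    apply: (closed_all adjsym conn (u := u)); first by rewrite inE eqxx.
    move=> x y; rewrite !inE;
    repeat (case/orP; [move/eqP -> ; rewrite ?nu ?nv ?nw ?nb ?nc ?na => /orP [] /eqP ->;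
      by rewrite eqxx ?orbT ?orTb | ]);
    move/eqP -> ; rewrite ?nu ?nv ?nw ?nb ?nc ?na => /orP [] /eqP ->;
      by rewrite eqxx ?orbT ?orTb.
  right; apply: (iso_of_seq (x0 := u) _ _ alls) => //.
    by rewrite /= !inE !negb_or; elim_eqs.
  case=> [[|[|[|[|[|[|i]]]]]] Hi] //; case=> [[|[|[|[|[|[|j]]]]]] Hj] //=;
    rewrite ?nu ?nv ?nw ?nb ?nc ?na ?adjirr; elim_eqs; by [].
exfalso.
pose f := fun t : T => ((t == a)%:R - (t == v)%:R + (t == b)%:R : R).
have := Lineq f.
have -> : \sum_t (deg adj t)%:R * f t ^+ 2 = 6.
  rewrite (@sum_support _ _ [:: a; v; b]) ?big_cons ?big_nil /=.
  - rewrite /f; elim_eqs; rewrite da dv db /=; ring.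
  - by rewrite !inE !negb_or; elim_eqs.
  - move=> t; rewrite !inE !negb_or => /and3P [ta tv tb]; rewrite /f; elim_eqs.
    by rewrite subrr addr0 expr0n /= mulr0.
have avgE : forall t, \sum_(x | adj t x) f x = (adj t a)%:R - (adj t v)%:R + (adj t b)%:R.
  by move=> t; rewrite /f big_split /= sumrB !sum_ind.
under eq_bigr => t _ do rewrite (term_eq mind) avgE na' nv' nb'.
rewrite (@sum_support _ _ [:: c; u; w; d]) ?big_cons ?big_nil /=.
- elim_eqs; rewrite /= ?orbT /= dc dd.
  lra.
- by rewrite !inE !negb_or; elim_eqs.
- move=> t; rewrite !inE !negb_or => /and4P [tc tu tw td]; elim_eqs.
  by rewrite /= subrr addr0 expr0n /= mul0r.
Qed.
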